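(* Let $C\subset\mathbb{R}^d$ be a cone and let $D$ be a $d$-dimensional subcone of $C$ such that for every $f$-subcone $S$ of $C$ either $D\subset S$ or $\operatorname{int}(D)\cap\operatorname{int}(S)=\emptyset$. Let $G_D$ be the intersection of the groups $\Gamma(S)$ over all $f$-subcones $S$ of $C$ with $S\supset D$, and $H_D$ the union of these groups. Then $D$ is $f$-covered (every element of $D\cap\mathbb{Z}^d$ is $f$-covered) if and only if every residue class of $\mathbb{Z}^d$ modulo $G_D$ meets $H_D$.
   Context: A cone is a subset $C\subset\mathbb{R}^d$ of the form $\mathbb{R}_+x_1+\dots+\mathbb{R}_+x_n$ with $x_i\in\mathbb{Z}^d$, assumed pointed ($x,-x\in C\Rightarrow x=0$) and of full dimension $d$; a subcone is a cone contained in $C$. $\operatorname{Hilb}(C)$ denotes the Hilbert basis of the monoid $C\cap\mathbb{Z}^d$, i.e. the set of nonzero elements of $C\cap\mathbb{Z}^d$ that cannot be written as $x+y$ with $x,y\in C\cap\mathbb{Z}^d$ both nonzero. An $f$-subcone of $C$ is a cone $S$ generated by $d$ linearly independent vectors $x_1,\dots,x_d\in\operatorname{Hilb}(C)$; for such $S$, $\Gamma(S)$ denotes the subgroup of $\mathbb{Z}^d$ generated by $x_1,\dots,x_d$ and $\Sigma(S)$ the submonoid of $\mathbb{Z}^d$ generated by $x_1,\dots,x_d$. An element $x\in C\cap\mathbb{Z}^d$ is $f$-covered if $x\in\Sigma(S)$ for some $f$-subcone $S$ of $C$; a subset of $C$ is $f$-covered if each of its lattice points is $f$-covered. (There are finitely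 many $f$-subcones, so $G_D$ has finite index when at least one $f$-subcone contains $D$; if none does, $G_D=\mathbb{Z}^d$ and $H_D=\emptyset$.) *)

(* Defs.v *)
From HB Require Import structures.
From mathcomp Require Import all_boot all_order all_algebra.
From mathcomp Require Import all_classical all_reals all_analysis.
Set Implicit Arguments. Unset Strict Implicit. Unset Printing Implicit Defensive.
Import Order.TTheory GRing.Theory Num.Theory.
Local Open Scope classical_set_scope.
Local Open Scope ring_scope.

Section Cones.
Variables (R : realType) (d : nat).

Definition vR (z : 'rV[int]_d) : 'rV[R]_d := map_mx (fun a : int => a%:~R) z.

Definition cone_gen (gens : seq 'rV[int]_d) : set 'rV[R]_d :=
  [set x | exists c : 'I_(size gens) -> R,
      (forall i, 0 <= c i) /\ x = \sum_(i < size gens) c i *: vR gens`_i].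

(* a cone in the sense of the paper: finitely generated by integer vectors,
   pointed, and of full dimension d (the generators span R^d) *)
Definition is_cone (C : set 'rV[R]_d) : Prop :=
  (exists gens : seq 'rV[int]_d,
      C = cone_gen gens /\
      (forall x : 'rV[R]_d, exists c : 'I_(size gens) -> R,
          x = \sum_(i < size gens) c i *: vR gens`_i)) /\
  (forall x, C x -> C (- x) -> x = 0).

Definition latC (C : set 'rV[R]_d) (z : 'rV[int]_d) : Prop := C (vR z).

Definition Hilb (C : set 'rV[R]_d) (z : 'rV[int]_d) : Prop :=
  latC C z /\ z <> 0 /\
  ~ (exists x y, latC C x /\ latC C y /\ x <> 0 /\ y <> 0 /\ z = x + y).

(* X (rows x_1,...,x_d) generates an f-subcone of C: the x_i are linearly
   independent elements of Hilb(C) *)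
Definition fgens (C : set 'rV[R]_d) (X : 'M[int]_d) : Prop :=
  (forall i, Hilb C (row i X)) /\ row_free (map_mx (fun a : int => a%:~R : R) X).

Definition fcone (X : 'M[int]_d) : set 'rV[R]_d := cone_gen [seq row i X | i <- enum 'I_d].

Definition Gamma (X : 'M[int]_d) (z : 'rV[int]_d) : Prop :=
  exists a : 'rV[int]_d, z = a *m X.
Definition Sigma (X : 'M[int]_d) (z : 'rV[int]_d) : Prop :=
  exists a : 'rV[int]_d, (forall j, 0 <= a 0 j) /\ z = a *m X.

Definition f_covered_pt (C : set 'rV[R]_d) (z : 'rV[int]_d) : Prop :=
  latC C z /\ exists X, fgens C X /\ Sigma X z.

Definition f_covered_set (C A : set 'rV[R]_d) : Prop :=
  forall z, A (vR z) -> f_covered_pt C z.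

Definition G_D (C D : set 'rV[R]_d) (z : 'rV[int]_d) : Prop :=
  forall X, fgens C X -> D `<=` fcone X -> Gamma X z.
Definition H_D (C D : set 'rV[R]_d) (z : 'rV[int]_d) : Prop :=
  exists X, fgens C X /\ D `<=` fcone X /\ Gamma X z.

End Cones.

(* Main.v *)
Require Import Defs.
From HB Require Import structures.
From mathcomp Require Import all_boot all_order all_algebra all_fingroup.
From mathcomp Require Import all_classical all_reals all_analysis.
From mathcomp Require Import lra zify.
Import Order.TTheory GRing.Theory Num.Theory.
Import numFieldNormedType.Exports.
Local Open Scope classical_set_scope.
Local Open Scope ring_scope.

Section S.
Variables (R : realType) (d : nat).
Implicit Types x y : 'rV[R]_d.
Local Notation vR := (@vR R d).
Local Notation Xr X := (map_mx (fun a : int => a%:~R : R) X).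

Lemma vRE z : vR z = map_mx (fun a : int => a%:~R : R) z. Proof. by []. Qed.
Lemma vRD a b : vR (a + b) = vR a + vR b.
Proof. by apply/matrixP => i j; rewrite !mxE intrD. Qed.
Lemma vRN a : vR (- a) = - vR a.
Proof. by apply/matrixP => i j; rewrite !mxE mulrNz. Qed.
Lemma vRB a b : vR (a - b) = vR a - vR b.
Proof. by rewrite vRD vRN. Qed.
Lemma vR0 : vR 0 = 0.
Proof. by apply/matrixP => i j; rewrite !mxE. Qed.
Lemma vRZ (k : int) a : vR (k *: a) = k%:~R *: vR a.
Proof. by apply/matrixP => i j; rewrite !mxE intrM. Qed.
Lemma vR_sum (I : finType) (F : I -> 'rV[int]_d) : vR (\sum_i F i) = \sum_i vR (F i).
Proof. exact: (big_morph _ vRD vR0). Qed.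
Lemma vR_inj a b : vR a = vR b -> a = b.
Proof. by move=> /matrixP H; apply/matrixP => i j; have := H i j; rewrite !mxE => /intr_inj. Qed.
Lemma vR_mul a (X : 'M[int]_d) : vR (a *m X) = vR a *m Xr X.
Proof. by rewrite /Defs.vR map_mxM. Qed.

Lemma nbhs_normP x (A : set 'rV[R]_d) :
  nbhs x A <-> exists2 r : R, 0 < r & forall y, `|x - y| < r -> A y.
Proof.
rewrite nbhs_ballP; split.
  by move=> [r r0 H]; exists r => // y Hy; apply: H; rewrite -ball_normE.
by move=> [r r0 H]; exists r => // y Hy; apply: H; rewrite -ball_normE in Hy.
Qed.

Lemma coord_le x j : `|x ord0 j| <= `|x|.
Proof.
have /mapP[k Hk ->] : `|x ord0 j| \in [seq `|x ij.1 ij.2| | ij : 'I_1 * 'I_d].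
  by apply/mapP; exists (ord0, j) => //=; rewrite mem_enum.
by rewrite [leRHS]/Num.Def.normr /= mx_normrE; apply/bigmax_geP; right => /=; exists k.
Qed.

Section Gens.
Variable gens : seq 'rV[int]_d.
Local Notation n := (size gens).
Local Notation G i := (vR gens`_i).

Definition spanning := forall x : 'rV[R]_d, exists c : 'I_n -> R,
  x = \sum_(i < n) c i *: G i.

Lemma cone_add a b : @cone_gen R d gens a -> @cone_gen R d gens b -> @cone_gen R d gens (a + b).
Proof.
move=> [c [c0 ->]] [c' [c0' ->]]; exists (fun i => c i + c' i); split.
  by move=> i; rewrite addr_ge0.
by rewrite -big_split; apply: eq_bigr => i _; rewrite scalerDl.
Qed.

Lemma span_bound : spanning -> exists2 K : R, 0 < K & forall q, exists c : 'I_n -> R,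
  (forall i, `|c i| <= K * `|q|) /\ q = \sum_(i < n) c i *: G i.
Proof.
move=> sp.
have [cj Hcj] := choice (fun j : 'I_d => sp (delta_mx 0 j)).
exists (1 + \sum_i \sum_j `|cj j i|); first by rewrite ltr_pwDl // sumr_ge0 // => i _; rewrite sumr_ge0.
move=> q; exists (fun i => \sum_j q 0 j * cj j i); split.
  move=> i; apply: (le_trans (ler_norm_sum _ _ _)).
  apply: (@le_trans _ _ (\sum_j `|q| * `|cj j i|)).
    apply: ler_sum => j _; rewrite normrM ler_wpM2r //.
    have -> : q 0 j = q ord0 j by [].
    exact: coord_le.
  rewrite -mulr_sumr mulrC ler_wpM2r //.
  rewrite [X in _ <= 1 + X](bigD1 i) //= addrA ler_wpDr //.
    by apply: sumr_ge0 => *; apply: sumr_ge0.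
  by rewrite lerDr.
rewrite {1}(row_sum_delta q).
under eq_bigr => j _ do rewrite (Hcj j) scaler_sumr.
rewrite exchange_big /=; apply: eq_bigr => i _; rewrite scaler_suml.
by apply: eq_bigr => j _; rewrite scalerA.
Qed.

Lemma cone_interior K q (t : R) : 0 < K -> (forall q, exists c : 'I_n -> R,
  (forall i, `|c i| <= K * `|q|) /\ q = \sum_(i < n) c i *: G i) ->
  K * `|q| < t -> @cone_gen R d gens (t *: \sum_(i < n) G i + q).
Proof.
move=> K0 HK lt; have [c [cb ->]] := HK q.
exists (fun i => t + c i); split.
  move=> i; have h1 : - c i <= `|c i| by rewrite -normrN ler_norm.
  have := le_trans h1 (cb i); move: lt; set u := K * _; lra.
by rewrite scaler_sumr -big_split; apply: eq_bigr => i _; rewrite scalerDl.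
Qed.

End Gens.

Lemma sum_cast {V : zmodType} {m k} (e : m = k) (F : 'I_m -> V) :
  \sum_(i < m) F i = \sum_(j < k) F (cast_ord (esym e) j).
Proof. by case: k / e; apply: eq_bigr => i _; congr F; apply: val_inj. Qed.

Local Notation sX X := [seq row i X | i <- enum 'I_d].

Lemma size_sX (X : 'M[int]_d) : size (sX X) = d.
Proof. by rewrite size_map size_enum_ord. Qed.

Lemma nth_sX (X : 'M[int]_d) j : (sX X)`_(cast_ord (esym (size_sX X)) j) = row j X.
Proof.
rewrite /= (nth_map j); last by rewrite size_enum_ord.
by rewrite nth_ord_enum.
Qed.

Lemma sum_sX (X : 'M[int]_d) (c : 'I_(size (sX X)) -> R) :
  \sum_(i < size (sX X)) c i *: vR (sX X)`_i =
  (\row_j c (cast_ord (esym (size_sX X)) j)) *m Xr X.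
Proof.
rewrite (sum_cast (size_sX X)) mulmx_sum_row; apply: eq_bigr => j _.
by rewrite nth_sX mxE /Defs.vR map_row.
Qed.

Lemma sum_sX' (X : 'M[int]_d) (a : 'rV[R]_d) :
  a *m Xr X = \sum_(i < size (sX X)) a 0 (cast_ord (size_sX X) i) *: vR (sX X)`_i.
Proof.
rewrite sum_sX; congr (_ *m _); apply/matrixP => i j; rewrite !mxE.
by rewrite (_ : i = 0) ?ord1 //; congr (a 0 _); apply: val_inj.
Qed.

Lemma fconeP (X : 'M[int]_d) x :
  fcone X x <-> exists a : 'rV[R]_d, (forall j, 0 <= a 0 j) /\ x = a *m Xr X.
Proof.
split.
  move=> [c [c0 ->]]; rewrite sum_sX; eexists; split; last by [].
  by move=> j; rewrite mxE.
move=> [a [a0 ->]]; rewrite sum_sX'; eexists; split; last by [].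
by move=> i; apply: a0.
Qed.

Lemma fcone_spanning (X : 'M[int]_d) : Xr X \in unitmx -> spanning (sX X).
Proof.
move=> U x; rewrite -(mulmxKV U x) sum_sX'; eexists; reflexivity.
Qed.

Lemma Sigma_fcone (X : 'M[int]_d) (y : 'rV[int]_d) : Sigma X y -> fcone X (vR y).
Proof.
move=> [a [a0 ->]]; apply/fconeP; exists (vR a); split; last by rewrite vR_mul.
by move=> j; rewrite mxE ler0z.
Qed.


Lemma term_le (gens : seq 'rV[int]_d) (i : 'I_(size gens)) j :
  `|vR gens`_i ord0 j| <= \sum_(k < size gens) `|vR gens`_k|.
Proof.
apply: le_trans (coord_le _ j) _.
by rewrite (bigD1 i) //= lerDl sumr_ge0.
Qed.

Lemma hilb_bound (C : set 'rV[R]_d) : is_cone C ->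
  exists B : R, forall z, Hilb C z -> forall j, `|(z ord0 j)%:~R : R| <= B.
Proof.
move=> [[gens [-> sp]] _].
exists (\sum_(k < size gens) `|vR gens`_k|) => z [[c [c0 Hz]] [nz irr]] j.
have coordE : forall w : 'rV[int]_d, (w ord0 j)%:~R = vR w ord0 j.
  by move=> w; rewrite mxE.
have [[i [ci1 gi0]] | Hno] := pselect (exists i, 1 <= c i /\ gens`_i != 0).
  have Li : @latC R d (@cone_gen R d gens) gens`_i.
    exists (fun k => (k == i)%:R); split; first by move=> k; case: (k == i).
    rewrite (bigD1 i) //= big1 => [|k /negbTE ->]; last by rewrite scale0r.
    by rewrite eqxx scale1r addr0.
  have Lz : @latC R d (@cone_gen R d gens) (z - gens`_i).
    exists (fun k => c k - (k == i)%:R); split.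
      move=> k; case: eqP => [->|_]; first by rewrite subr_ge0.
      by rewrite subr0.
    under eq_bigr => k _ do rewrite scalerBl.
    rewrite sumrB -Hz vRB; congr (_ - _).
    rewrite (bigD1 i) //= big1 => [|k /negbTE ->]; last by rewrite scale0r.
    by rewrite eqxx scale1r addr0.
  have zi : z = gens`_i.
    apply/eqP; rewrite -subr_eq0; apply/eqP.
    apply: contrapT => H; apply: irr; exists gens`_i, (z - gens`_i).
    split; first exact: Li. split; first exact: Lz.
    split; first by apply/eqP. split; first exact: H.
    by rewrite addrC subrK.
  by rewrite zi coordE term_le.
rewrite coordE Hz summxE; apply: le_trans (ler_norm_sum _ _ _) _.
apply: ler_sum => i _; rewrite mxE.
have [gi0|gi0] := eqVneq gens`_i 0.
  by rewrite gi0 vR0 mxE mulr0 normr0.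
have ci1 : c i < 1.
  rewrite ltNge; apply/negP => H; apply: Hno; by exists i.
rewrite normrM (ger0_norm (c0 i)); apply: le_trans (coord_le _ j).
by rewrite ler_piMl // ltW.
Qed.


Lemma det_bound n (X : 'M[int]_n) (b : int) : 0 <= b ->
  (forall i j, `|X i j| <= b) -> `|\det X| <= (n`!)%:Z * b ^+ n.
Proof.
move=> b0 Hb; rewrite /determinant.
apply: le_trans (ler_norm_sum _ _ _) _.
apply: (@le_trans _ _ (\sum_(s : 'S_n) b ^+ n)).
  apply: ler_sum => s _; rewrite normrM normrX normrN normr1 expr1n mul1r normr_prod.
  rewrite -[X in b ^+ X](card_ord n) -prodr_const; apply: ler_prod => i _; rewrite normr_ge0 /=.
  exact: Hb.
by rewrite sumr_const card_Sn -mulr_natl natz.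
Qed.

Lemma common_mult (C : set 'rV[R]_d) : is_cone C ->
  exists N : int, N != 0 /\ forall X, fgens C X -> forall w, Gamma X (N *: w).
Proof.
move=> Cc; have [B HB] := hilb_bound _ Cc.
pose Bi : int := ((Num.truncn B).+1)%:Z.
pose M : int := (d`!)%:Z * Bi ^+ d.
exists (((`|M|%N)`!)%:Z); split.
  by rewrite eqz_nat -lt0n fact_gt0.
move=> X [Hrows Hfree] w.
have HX : forall i j, `|X i j| <= Bi.
  move=> i j; have := HB _ (Hrows i) j; rewrite mxE => H.
  rewrite -(ler_int R) intr_norm; apply: (le_trans H); apply: ltW.
  by rewrite /Bi -pmulrn truncnS_gt.
have detB : `|\det X| <= (d`!)%:Z * Bi ^+ d by apply: det_bound.
have det0 : \det X != 0.
  move: Hfree; rewrite row_free_unit unitmxE det_map_mx.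
  by apply: contraTneq => ->; rewrite rmorph0 unitr0.
have : (\det X %| ((`|M|%N)`!)%:Z)%Z.
  rewrite dvdzE /=; apply: dvdn_fact; apply/andP; split.
    by rewrite absz_gt0.
  rewrite -lez_nat !abszE; apply: le_trans detB _.
  by rewrite ler_norm.
move=> /dvdzP [q ->].
exists (q *: (w *m \adj X)).
by rewrite -scalemxAl -mulmxA mul_adj_mx mul_mx_scalar scalerA.
Qed.


Lemma conv (C D : set 'rV[R]_d) : D `<=` C ->
  (forall z : 'rV[int]_d, exists h, H_D C D h /\ G_D C D (z - h)) -> f_covered_set C D.
Proof.
move=> DC H x Dx; have [h [[X [fX [DX Gh]]] Gzh]] := H x.
split; first exact: DC Dx.
exists X; split => //.
have [a Ha] := Gzh X fX DX; have [b Hb] := Gh.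
have xE : x = (a + b) *m X by rewrite mulmxDl -Ha -Hb subrK.
have U : Xr X \in unitmx by rewrite -row_free_unit; exact: fX.2.
have [r [r0 Hr]] := (fconeP X (vR x)).1 (DX _ Dx).
have E : vR (a + b) = r.
  by rewrite -(mulmxK U (vR (a + b))) -vR_mul -xE Hr mulmxK.
exists (a + b); split => // j.
by rewrite -(ler0z R); have := r0 j; rewrite -E mxE.
Qed.

Lemma fwd (C D : set 'rV[R]_d) : is_cone C -> is_cone D -> D `<=` C ->
  (forall X : 'M[int]_d, fgens C X ->
     D `<=` fcone X \/ interior D `&` interior (fcone X) = set0) ->
  f_covered_set C D ->
  (forall z : 'rV[int]_d, exists h : 'rV[int]_d, H_D C D h /\ G_D C D (z - h)).
Proof.
move=> Cc [[gD [DE spD]] _] DC Hdich Hcov z.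
have [N [N0 HN]] := common_mult _ Cc.
have [K K0 HK] := span_bound _ spD.
pose wD := \sum_(i < size gD) gD`_i.
pose k := (Num.truncn (K * (`|vR z| + 1))).+1.
pose T : int := N * (N * k%:Z).
pose y := z + T *: wD.
have kT : (k%:R : R) <= T%:~R.
  rewrite pmulrn ler_int /T.
  have kk0 : (0 <= k%:Z)%R by [].
  move: N0 kk0; rewrite mulrA; move: (k%:Z) => kk kk0 N0.
  have h : 1 <= N * N.
    have [N1|N1] : N < 0 \/ 0 < N by lia.
      by rewrite -mulrNN; apply: mulr_ege1; lia.
    by apply: mulr_ege1; lia.
  by rewrite -{1}[kk]mul1r ler_wpM2r.
have Hy : forall x', `|vR y - x'| < 1 -> D x'.
  move=> x' Hx'.
  have -> : x' = T%:~R *: \sum_(i < size gD) vR gD`_i + (vR z + (x' - vR y)).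
    rewrite /y vRD vRZ vR_sum; set a := _ *: _; set b := vR z.
    by rewrite addrA [a + b]addrC addrC subrK.
  rewrite DE; apply: (@cone_interior gD K _ _ K0 HK).
  apply: lt_le_trans kT; apply: lt_trans (truncnS_gt _).
  rewrite ltr_pM2l //; apply: le_lt_trans (ler_normD _ _) _.
  by rewrite ltrD2l -normrN opprB.
have Dy : D (vR y) by apply: Hy; rewrite subrr normr0.
have [_ [X [fX Sy]]] := Hcov y Dy.
have DX : D `<=` fcone X.
  case: (Hdich X fX) => // Hdisj; exfalso.
  have U : Xr X \in unitmx by rewrite -row_free_unit; exact: fX.2.
  have [Kx Kx0 HKx] := span_bound _ (fcone_spanning _ U).
  pose s := \sum_(i < size [seq row i X | i <- enum 'I_d]) vR [seq row i X | i <- enum 'I_d]`_i.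
  pose e : R := (2 * (`|s| + 1))^-1.
  have e0 : 0 < e by rewrite invr_gt0 mulr_gt0 // ltr_pwDr.
  have es : `|e *: s| < 2^-1.
    rewrite normrZ ger0_norm ?ltW // /e mulrC ltr_pdivrMr; last first.
      by rewrite mulr_gt0 // ltr_pwDr.
    have := normr_ge0 s; lra.
  pose p := vR y + e *: s.
  have : (interior D `&` interior (fcone X)) p; last by rewrite Hdisj.
  split.
    apply/nbhs_normP; exists (2^-1) => // x' Hx'; apply: Hy.
    apply: le_lt_trans (ler_distD p _ _) _.
    have -> : vR y - p = - (e *: s) by rewrite /p opprD addrA subrr add0r.
    by rewrite normrN; move: es Hx'; lra.
  apply/nbhs_normP; exists (e / Kx); first by rewrite divr_gt0.
  move=> x' Hx'.
  have -> : x' = vR y + (e *: s + (x' - p)).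
    by rewrite /p addrA addrC subrK.
  apply: cone_add; first exact: Sigma_fcone.
  apply: (@cone_interior _ Kx _ _ Kx0 HKx).
  by rewrite -ltr_pdivlMl // -normrN opprB mulrC.
exists y; split.
  exists X; split => //; split => //.
  by have [a [_ ->]] := Sy; exists a.
move=> X' fX' _.
have -> : z - y = N *: (- ((N * k%:Z) *: wD)).
  by rewrite /y opprD addrA subrr add0r scalerN scalerA.
exact: HN.
Qed.

End S.

Theorem lemma3p1 (R : realType) (d : nat) (C D : set 'rV[R]_d) :
  is_cone C -> is_cone D -> D `<=` C ->
  (forall X : 'M[int]_d, fgens C X ->
     D `<=` fcone X \/ interior D `&` interior (fcone X) = set0) ->
  f_covered_set C D <->
  (forall z : 'rV[int]_d, exists h : 'rV[int]_d, H_D C D h /\ G_D C D (z - h)).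
Proof.
move=> Cc Dc DC Hd; split.
  exact: fwd.
exact: conv.
Qed.
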